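(* Let $n\ge4$ be even and $x\in Y_1$. If $1\le i\le j\le n-1$, then $\nu_i(x)\le\nu_j(x)$ in the Bruhat order of $\mathcal F_n$.
   Context: $s_i=(i,i+1)$; permutations compose right to left. $\mathcal F_m$ is the set of fixed-point-free involutions in $S_m$ with conjugation action, height $\ell/2$, and Bruhat order the weakest partial order with $z\le tzt$ for transpositions $t$ with $\ell(z)\le\ell(tzt)$. Regard $\mathcal F_{n-2}\subset S_n$; $w_0$ longest element of $S_n$; $Y_1=\{w_0zs_{n-1}w_0:z\in\mathcal F_{n-2}\}$; $\sigma_j=s_j\cdots s_1$; $\nu_j(x)=\sigma_jx\sigma_j^{-1}$. *)

(* Defs.v *)
(* Permutations of {1,...,n} are modelled as {perm 'I_n}
   (0-based: the point k of the paper is the ordinal k-1).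
   NOTE on composition: in MathComp, (u * v) x = v (u x), i.e. the product
   is applied LEFT TO RIGHT.  The paper composes right to left, so the
   paper's product  a b  is MathComp's  b * a. *)
From HB Require Import structures.
From mathcomp Require Import all_boot all_order all_fingroup.
From Stdlib Require Import Relations.
Set Implicit Arguments.
Unset Strict Implicit.
Unset Printing Implicit Defensive.
Local Open Scope group_scope.

(* simple transposition s_i = (i, i+1) (paper's 1-based points), 1 <= i <= n-1;
   it is the identity for out-of-range i (never used in that case). *)
Definition s_ (n i : nat) : {perm 'I_n} :=
  match @insub nat (fun k => k < n) _ i.-1, @insub nat (fun k => k < n) _ i with
  | Some a, Some b => tperm a b
  | _, _ => 1
  end.

Definition w0 (n : nat) : {perm 'I_n} := perm (@rev_ord_inj n).

(* sigma_j = s_j ... s_1 (right to left: s_1 applied first) *)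
Fixpoint sigma_ (n j : nat) : {perm 'I_n} :=
  match j with
  | 0 => 1
  | j'.+1 => sigma_ n j' * s_ n j'.+1
  end.

(* nu_j(x) = sigma_j x sigma_j^{-1} (paper order) = x ^ sigma_j in MathComp *)
Definition nu_ (n j : nat) (x : {perm 'I_n}) : {perm 'I_n} :=
  (sigma_ n j)^-1 * x * sigma_ n j.

Definition ell (n : nat) (z : {perm 'I_n}) : nat :=
  #|[set p : 'I_n * 'I_n | (p.1 < p.2)%N && (z p.2 < z p.1)%N]|.

Definition fpf_inv (n : nat) (z : {perm 'I_n}) : bool :=
  [forall k, z (z k) == k] && [forall k, z k != k].

(* z is an element of F_{m} regarded inside S_n (m <= n): an involution
   whose fixed points are exactly the points > m (1-based). *)
Definition in_F_sub (m n : nat) (z : {perm 'I_n}) : bool :=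
  [forall k, z (z k) == k] && [forall k : 'I_n, (z k != k) == (k < m)%N].

Definition is_transposition (n : nat) (t : {perm 'I_n}) : Prop :=
  exists a b : 'I_n, a != b /\ t = tperm a b.

Definition bruhat_step (n : nat) (z y : {perm 'I_n}) : Prop :=
  fpf_inv z /\ exists t, is_transposition t /\ y = t^-1 * z * t /\ (ell z <= ell y)%N.

Definition bruhatF (n : nat) (u v : {perm 'I_n}) : Prop :=
  fpf_inv u /\ fpf_inv v /\ clos_refl_trans _ (@bruhat_step n) u v.

(* Y_1 = { w0 z s_{n-1} w0 : z in F_{n-2} } (paper order),
   i.e. w0 * s_{n-1} * z * w0 in MathComp order. *)
Definition inY1 (n : nat) (x : {perm 'I_n}) : Prop :=
  exists z : {perm 'I_n}, in_F_sub n.-2 z /\ x = w0 n * s_ n n.-1 * z * w0 n.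

(* Main.v *)
Require Import Defs.
From mathcomp Require Import all_boot all_order all_fingroup zify.
From Stdlib Require Import Relations.
Local Open Scope group_scope.

Lemma sE n i (Hi : (i < n)%N) (Hi1 : (i.+1 < n)%N) :
  s_ n i.+1 = tperm (Ordinal Hi) (Ordinal Hi1).
Proof.
rewrite /s_ /= insubT insubT. by [].
Qed.

Lemma sv n i (Hi1 : (i.+1 < n)%N) (c : 'I_n) :
  val (s_ n i.+1 c) = if val c == i then i.+1 else if val c == i.+1 then i else val c.
Proof.
have Hi : (i < n)%N by lia.
rewrite (@sE n i Hi Hi1).
case: tpermP => [->|->|]; rewrite /= ?eqxx //; first by case: eqP => //; lia.
move=> h1 h2.
have /negbTE -> : val c != i by apply/eqP => e; apply h1; apply val_inj.
have /negbTE -> : val c != i.+1 by apply/eqP => e; apply h2; apply val_inj.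
by [].
Qed.

Lemma ell_conj n (w : {perm 'I_n}) k (Hk : (k.+1 < n)%N) :
  (forall y, w (w y) = y) -> (forall c : 'I_n, val c = k -> val (w c) = 0) ->
  (ell w <= ell ((s_ n k.+1)^-1 * w * s_ n k.+1))%N.
Proof.
move=> winv wk.
set t := s_ n k.+1.
have tinj : injective (fun p : 'I_n * 'I_n => (t p.1, t p.2)).
  by move=> [a b] [c d] /= [/perm_inj -> /perm_inj ->].
rewrite /ell -(card_imset _ tinj).
apply: subset_leq_card; apply/subsetP => q /imsetP [[a b] + ->].
rewrite !inE /= => /andP [ab wba].
have tv := @sv n k Hk.
have key : forall u v : 'I_n, (u < v)%N -> ~ (val u = k /\ val v = k.+1) -> (val (t u) < val (t v))%N.
  move=> u v uv nuv; rewrite /t !tv.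
  have uv' : (val u < val v)%N := uv; clear uv.
  by repeat case: eqP => ?; lia.
have e : forall y, ((t^-1 * w * t) (t y)) = t (w y) by move=> y; rewrite !permM permK.
have wba' : (val (w b) < val (w a))%N := wba.
have ab' : (val a < val b)%N := ab.
rewrite !e; apply/andP; split.
  apply: key => // -[ak bk]; have := wk _ ak; lia.
apply: key => // -[bk ak].
have := wk _ bk; rewrite winv => b0; lia.
Qed.

Lemma fpf_conj n (g c : {perm 'I_n}) : fpf_inv g -> fpf_inv (c^-1 * g * c).
Proof.
case/andP => /forallP h1 /forallP h2; apply/andP; split; apply/forallP => k; rewrite !permM.
  by rewrite permK (eqP (h1 _)) permKV.
apply: contra (h2 (c^-1 k)) => /eqP e.
by rewrite -{2}e permK.
Qed.

Lemma sigma_v n j : (1 <= j)%N -> (j < n)%N -> forall a : 'I_n,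
  (val a = 0%N -> val (sigma_ n j a) = j) /\ (val a = 1%N -> val (sigma_ n j a) = 0%N).
Proof.
elim: j => [//|j IH] _ Hj a.
have Hs := @sv n j Hj.
case: j IH Hj Hs => [|j] IH Hj Hs.
  rewrite /= mul1g; case: a {IH} => m Hm; split => /= e; rewrite Hs /= e //.
have [h0 h1] := IH erefl (ltnW Hj) a.
rewrite /= permM -/(sigma_ n j.+1) Hs.
split => e.
  by rewrite h0 // eqxx.
by rewrite h1.
Qed.

Lemma nuS n i (x : {perm 'I_n}) : nu_ i.+1 x = (s_ n i.+1)^-1 * nu_ i x * s_ n i.+1.
Proof. by rewrite /nu_ /= invMg !mulgA. Qed.

Lemma nu_at n i (x : {perm 'I_n}) : (1 <= i)%N -> (i < n)%N ->
  (forall c : 'I_n, val c = 0%N -> val (x c) = 1%N) ->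
  forall c : 'I_n, val c = i -> val (nu_ i x c) = 0%N.
Proof.
move=> i1 iN hx c ci.
have [z0 _] := @sigma_v n i i1 iN (Ordinal (leq_ltn_trans (leq0n i) iN)).
have e : sigma_ n i (Ordinal (leq_ltn_trans (leq0n i) iN)) = c by apply: val_inj; rewrite z0.
rewrite /nu_ !permM -e permK.
have [_ ->] := @sigma_v n i i1 iN (x (Ordinal (leq_ltn_trans (leq0n i) iN))) => //.
exact: hx.
Qed.

Lemma w0v n (k : 'I_n) : val (w0 n k) = (n - k.+1)%N.
Proof. by rewrite /w0 permE. Qed.

Lemma w0v' n (k : 'I_n) : nat_of_ord (w0 n k) = (n - k.+1)%N.
Proof. by rewrite /w0 permE. Qed.

Lemma w0V n : (w0 n)^-1 = w0 n.
Proof.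
apply/permP => k; apply: (@perm_inj _ (w0 n)); rewrite permKV.
  apply: val_inj; rewrite w0v w0v'; case: k => m hm /=; lia.
Qed.

Lemma x_facts n (x : {perm 'I_n}) : (4 <= n)%N -> inY1 x ->
  fpf_inv x /\ (forall c : 'I_n, val c = 0%N -> val (x c) = 1%N).
Proof.
move=> n4 [z [/andP [/forallP zi /forallP zf] ->]].
have Hs : ((n.-2).+1 < n)%N by lia.
have nn : n.-1 = (n.-2).+1 by lia.
have sv' := @sv n n.-2 Hs.
rewrite nn.
set s := s_ n (n.-2).+1.
have zfix : forall c : 'I_n, (n.-2 <= c)%N -> z c = c.
  move=> c hc; have := zf c; rewrite ltnNge hc /=.
  by move/eqP/negbFE/eqP.
have zi' : forall c, z (z c) = c by move=> c; apply/eqP.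
have zlt : forall c : 'I_n, (c < n.-2)%N -> (z c < n.-2)%N.
  move=> c hc; rewrite ltnNge; apply/negP => h.
  have := zi' c; rewrite (zfix _ h) => e.
  by move: h; rewrite e leqNgt hc.
have sfix : forall c : 'I_n, (c < n.-2)%N -> s c = c.
  move=> [m hm] hc; apply: val_inj; rewrite sv' /=.
  case: eqP => e; first by move: hc; rewrite /= e; lia.
  case: eqP => e2 //; move: hc; rewrite /= e2; lia.
have sge : forall c : 'I_n, (n.-2 <= c)%N -> (n.-2 <= s c)%N.
  move=> c hc; rewrite sv'; case: eqP => _; first by [].
  case: eqP => _ //.
have comm : forall c, z (s c) = s (z c).
  move=> c; case: (leqP n.-2 c) => hc.
    by rewrite (zfix _ (sge _ hc)) (zfix _ hc).
  by rewrite (sfix _ hc) (sfix _ (zlt _ hc)).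
have sinv : forall c, s (s c) = c by move=> c; rewrite /s (@sE n n.-2 (ltnW Hs) Hs) tpermK.
split.
  rewrite -(mulgA (w0 n) s z) -{1}w0V; apply: fpf_conj.
  apply/andP; split; apply/forallP => c; rewrite !permM.
    by rewrite comm zi' sinv.
  case: (leqP n.-2 c) => hc.
    rewrite (zfix _ (sge _ hc)); apply/eqP => /(congr1 val); rewrite sv'.
    case: c hc => m hm /= hc.
    case: eqP => [->|h1]; first lia.
    case: eqP => [->|h2]; first lia.
    lia.
  by rewrite (sfix _ hc) (eqP (zf c)).
move=> [m hm] /= c0; set c := Ordinal hm; rewrite !permM.
have e1 : val (w0 n c) = n.-1 by rewrite w0v /= c0; lia.
have e2 : val (s (w0 n c)) = n.-2 by rewrite sv' e1; case: eqP => [|_]; [lia| rewrite nn eqxx].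
rewrite zfix; last by rewrite e2.
by rewrite w0v e2; lia.
Qed.

Theorem corollary3p6 (n : nat) (x : {perm 'I_n}) (i j : nat) :
  ~~ odd n -> (4 <= n)%N -> inY1 x ->
  (1 <= i)%N -> (i <= j)%N -> (j <= n.-1)%N ->
  bruhatF (nu_ i x) (nu_ j x).
Proof.
move=> ev n4 hY i1 ij jn.
have [fx hx] := @x_facts n x n4 hY.
have fnu : forall k, fpf_inv (nu_ k x) by move=> k; apply: fpf_conj.
split; [exact: fnu | split; [exact: fnu|]].
elim: j ij jn => [|j IH] ij jn; first by lia.
case: (eqVneq i j.+1) => [->|ne]; first exact: rt_refl.
have ij' : (i <= j)%N by lia.
apply: rt_trans (IH ij' _) _; first by lia.
apply: rt_step; split; first exact: fnu.
have Hk : (j.+1 < n)%N by lia.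
have Hj : (j < n)%N by lia.
exists (s_ n j.+1); split.
  exists (Ordinal Hj), (Ordinal Hk); split; last exact: sE.
  by rewrite -val_eqE /=; apply/eqP; lia.
split; first exact: nuS.
rewrite nuS; apply: ell_conj => //.
  by move=> y; apply/eqP; case/andP: (fnu j) => /forallP.
apply: nu_at => //; lia.
Qed.
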